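(* Let $D$ be a square-free integer and let $N>1$ be an odd square-free composite integer such that $\gcd(N, D)=1$. Then $N$ is a $\mathcal{G}(D)$-Carmichael number if and only if $\mathcal{F}_D(q) \mid \mathcal{F}_D(N)$ for every prime $q \mid N$.
   Context: For an integer $n \ge 2$ with $\gcd(n,D)=1$, $\mathcal{F}_D(n) := n - \left(\frac{D}{n}\right)$, where $\left(\frac{D}{n}\right)$ is the Kronecker symbol. For an integer $n \ge 2$ and a square-free integer $D$: if $D \equiv 2,3 \pmod 4$, let $\mathcal{I}_n(D) = \{a + b\sqrt{D} : a,b \in \mathbb{Z}/n\mathbb{Z}\}$ and $\mathcal{G}_n(D) = \{a + b\sqrt{D} \in \mathcal{I}_n(D) : a^2 - Db^2 \equiv 1 \pmod n\}$; if $D \equiv 1 \pmod 4$, let $\omega = \frac{1+\sqrt D}{2}$, $\mathcal{I}_n(D) = \{a + b\omega : a,b \in \mathbb{Z}/n\mathbb{Z}\}$ and $\mathcal{G}_n(D) = \{a + b\omega \in \mathcal{I}_n(D) : a^2 + ab + \frac{1-D}{4} b^2 \equiv 1 \pmod n\}$; $\mathcal{I}_n(D)$ is the ring $\mathcal{O}_L/n\mathcal{O}_L$, $L=\mathbb{Q}(\sqrt D)$, and $x \equiv y \pmod n$ means equality in $\mathcal{I}_n(D)$. For an odd composite integer $N$ with $\gcd(N,D)=1$: $N$ is a $\mathcal{G}(D)$-pseudoprime to base $\alpha \in \mathcal{G}_N(D)\setminus\{1,-1\}$ if $\alpha^{\mathcal{F}_D(N)} \equiv 1 \pmod N$; $N$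 is a $\mathcal{G}(D)$-Carmichael number if it is a $\mathcal{G}(D)$-pseudoprime to every base, i.e. $\alpha^{\mathcal{F}_D(N)} \equiv 1 \pmod N$ for every $\alpha \in \mathcal{G}_N(D)$. *)

(* Defs.v *)
From mathcomp Require Import all_boot all_order all_algebra.
Set Implicit Arguments. Unset Strict Implicit. Unset Printing Implicit Defensive.
Import Order.TTheory GRing.Theory Num.Theory.
Local Open Scope ring_scope.

Definition squarefree_nat (n : nat) : Prop :=
  (0 < n)%N /\ forall p : nat, prime p -> ~~ (p * p %| n)%N.
Definition squarefree_int (D : int) : Prop := squarefree_nat `|D|%N.

Definition kron_prime (D : int) (p : nat) : int :=
  if p == 2%N then
    (if (2 %| D)%Z then 0
     else if ((D %% 8)%Z == 1) || ((D %% 8)%Z == 7) then 1 else -1)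
  else if (p%:Z %| D)%Z then 0
  else if [exists x : 'I_p, (p%:Z %| (x%:Z) ^+ 2 - D)%Z] then 1 else -1.

Definition kronecker (D : int) (n : nat) : int :=
  \prod_(p <- primes n) kron_prime D p ^+ logn p n.

Definition FD (D : int) (n : nat) : int := n%:Z - kronecker D n.

(* Elements a + b*sqrt D (D = 2,3 mod 4) or a + b*omega (D = 1 mod 4),
   omega = (1+sqrt D)/2, represented by integer pairs (a, b). *)
Definition qmul (D : int) (x y : int * int) : int * int :=
  let: (a, b) := x in let: (c, d) := y in
  if (D %% 4)%Z == 1 then
    (a * c + b * d * ((D - 1) %/ 4)%Z, a * d + b * c + b * d)
  else (a * c + D * b * d, a * d + b * c).

Definition qnorm (D : int) (x : int * int) : int :=
  let: (a, b) := x in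
  if (D %% 4)%Z == 1 then a ^+ 2 + a * b + ((1 - D) %/ 4)%Z * b ^+ 2
  else a ^+ 2 - D * b ^+ 2.

Definition qpow (D : int) (x : int * int) (k : nat) : int * int :=
  iter k (qmul D x) (1, 0).

(* equality in I_n(D) = O_L / n O_L *)
Definition qeqmod (n : nat) (x y : int * int) : Prop :=
  (x.1 == y.1 %[mod n%:Z])%Z /\ (x.2 == y.2 %[mod n%:Z])%Z.

Definition inG (D : int) (n : nat) (x : int * int) : Prop :=
  (qnorm D x == 1 %[mod n%:Z])%Z.

(* N is a G(D)-Carmichael number (N odd composite, gcd(N, D) = 1, and
   alpha^{F_D(N)} = 1 in I_N(D) for every alpha in G_N(D)).
   F_D(N) >= N - 1 > 0 here, so the exponent is `|F_D(N)|. *)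
Definition G_Carmichael (D : int) (N : nat) : Prop :=
  [/\ odd N, (1 < N)%N, ~~ prime N, coprimez N%:Z D &
   forall x : int * int, inG D N x -> qeqmod N (qpow D x `|FD D N|%N) (1, 0)].

(* Main.v *)
Require Import Defs.
From mathcomp Require Import all_boot all_order all_algebra all_fingroup all_solvable all_field.
From mathcomp Require Import ring zify.
Set Implicit Arguments. Unset Strict Implicit. Unset Printing Implicit Defensive.
Import Order.TTheory GRing.Theory Num.Theory.
Local Open Scope ring_scope.


Lemma D4facts (D : int) : (D %% 4)%Z = 1 ->
  ((D - 1) %/ 4)%Z * 4 + 1 = D /\ ((1 - D) %/ 4)%Z = - ((D - 1) %/ 4)%Z.
Proof.
move=> H; have E := divz_eq D 4; rewrite H in E.
have E1 : D - 1 = (D %/ 4)%Z * 4 by rewrite {1}E; ring.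
have E2 : 1 - D = (- (D %/ 4)%Z) * 4 by rewrite {1}E; ring.
by rewrite E1 E2 !mulzK //; split => //; rewrite -E1; ring.
Qed.

Lemma four_neq0 (K : fieldType) : (2%:R : K) != 0 -> (4%:R : K) != 0.
Proof.
move=> two; have -> : (4%:R : K) = 2%:R * 2%:R by rewrite -natrM.
by apply: mulf_neq0.
Qed.

Section Phi.
Variables (K : fieldType) (D : int).

Definition wt (t : K) : K := if (D %% 4)%Z == 1 then (1 + t) / 2%:R else t.
Definition phi (t : K) (x : int * int) : K := x.1%:~R + x.2%:~R * wt t.

Variable t : K.
Hypothesis tD : t ^+ 2 = D%:~R.
Hypothesis two : (2%:R : K) != 0.

Lemma wt_sq : if (D %% 4)%Z == 1 then wt t ^+ 2 = wt t + ((D - 1) %/ 4)%Z%:~R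
              else wt t ^+ 2 = D%:~R.
Proof.
rewrite /wt; case: (D %% 4 =P 1)%Z => H //.
have [E1 _] := D4facts H.
have : t ^+ 2 = ((D - 1) %/ 4)%Z%:~R * 4%:R + 1.
  by rewrite tD -{1}E1 intrD intrM.
set m := (_%:~R) => E.
have h4 : (4%:R : K) != 0.
  have -> : (4%:R : K) = 2%:R * 2%:R by rewrite -natrM.
  by apply: mulf_neq0.
apply: (mulIf h4).
have -> : ((1 + t) / 2%:R) ^+ 2 * 4%:R = 1 + 2%:R * t + t ^+ 2 by field.
rewrite E; field; exact: two.
Qed.


Lemma phiM x y : phi t (qmul D x y) = phi t x * phi t y.
Proof.
case: x y => [a b] [c d]; rewrite /qmul /phi /=.
have := wt_sq; case: ifP => _ E.
  have -> : (a%:~R + b%:~R * wt t) * (c%:~R + d%:~R * wt t) =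
    a%:~R * c%:~R + (a%:~R * d%:~R + b%:~R * c%:~R) * wt t + b%:~R * d%:~R * wt t ^+ 2 :> K by ring.
  rewrite E !(intrD, intrM); ring.
have -> : (a%:~R + b%:~R * wt t) * (c%:~R + d%:~R * wt t) =
  a%:~R * c%:~R + (a%:~R * d%:~R + b%:~R * c%:~R) * wt t + b%:~R * d%:~R * wt t ^+ 2 :> K by ring.
rewrite E !(intrD, intrM); ring.
Qed.

Lemma phi1 : phi t (1, 0) = 1.
Proof. by rewrite /phi /= mul0r addr0. Qed.

Lemma phi_pow x k : phi t (qpow D x k) = phi t x ^+ k.
Proof.
elim: k => [|k IH]; first by rewrite expr0 /qpow /= phi1.
by rewrite /qpow iterS -/(qpow D x k) phiM IH exprS.
Qed.

End Phi.

Lemma phi_norm (K : fieldType) (D : int) (t : K) x :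
  t ^+ 2 = D%:~R -> (2%:R : K) != 0 ->
  phi D t x * phi D (- t) x = (qnorm D x)%:~R.
Proof.
move=> tD two; case: x => a b; rewrite /phi /wt /qnorm /=.
case: (D %% 4 =P 1)%Z => H.
  have [E1 E2] := D4facts H; rewrite E2.
  have -> : (a%:~R + b%:~R * ((1 + t) / 2%:R)) * (a%:~R + b%:~R * ((1 + - t) / 2%:R))
     = a%:~R ^+ 2 + a%:~R * b%:~R + b%:~R ^+ 2 * (1 - t ^+ 2) / 4%:R :> K.
    by field; rewrite two four_neq0.
  rewrite tD -{1}E1 !(intrD, intrM, intrN, rmorphXn) /=.
  by field; rewrite four_neq0.
have -> : (a%:~R + b%:~R * t) * (a%:~R + b%:~R * (- t))
     = a%:~R ^+ 2 - b%:~R ^+ 2 * t ^+ 2 :> K by ring.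
rewrite tD !(intrD, intrM, intrN, rmorphXn) /=; ring.
Qed.


Lemma intr_eq0_pchar (R : nzRingType) (q : nat) (z : int) :
  q \in [pchar R] -> ((z%:~R : R) == 0) = (q%:Z %| z)%Z.
Proof.
by move=> chq; rewrite (dvdz_pcharf chq).
Qed.

Lemma intr_eq_pchar (R : nzRingType) (q : nat) (z1 z2 : int) :
  q \in [pchar R] -> ((z1%:~R : R) == z2%:~R) = (z1 == z2 %[mod q%:Z])%Z.
Proof.
move=> chq; rewrite eqz_mod_dvd -(intr_eq0_pchar _ chq) intrB subr_eq0 //.
Qed.

Lemma wt_diff (K : fieldType) (D : int) (t : K) : (2%:R : K) != 0 -> t != 0 ->
  wt D t - wt D (- t) != 0.
Proof.
move=> two tn0; rewrite /wt; case: ifP => _.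
  have -> : (1 + t) / 2%:R - (1 + - t) / 2%:R = t :> K by field.
  by [].
have -> : t - - t = 2%:R * t :> K by ring.
by rewrite mulf_neq0.
Qed.

Lemma qeqmod_phi (K : fieldType) (D : int) (q : nat) (t : K) x :
  q \in [pchar K] -> t != 0 -> (2%:R : K) != 0 ->
  qeqmod q x (1, 0) <-> (phi D t x = 1 /\ phi D (- t) x = 1).
Proof.
move=> chq tn0 two; case: x => a b; rewrite /qeqmod /phi /=.
rewrite -!(intr_eq_pchar _ _ chq) /= mulr1z mulr0z.
split.
  by case=> /eqP -> /eqP ->; rewrite !mul0r !addr0.
case=> E1 E2.
have : (b%:~R : K) * (wt D t - wt D (- t)) = 0.
  have -> : (b%:~R : K) * (wt D t - wt D (- t)) =
     (a%:~R + b%:~R * wt D t) - (a%:~R + b%:~R * wt D (- t)) by ring.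
  by rewrite E1 E2 subrr.
move/eqP; rewrite mulf_eq0 (negPf (wt_diff D two tn0)) orbF => /eqP hb.
by rewrite hb mul0r addr0 in E1; rewrite E1 hb !eqxx.
Qed.

Lemma inG_phi (K : fieldType) (D : int) (q : nat) (t : K) x :
  q \in [pchar K] -> t ^+ 2 = D%:~R -> (2%:R : K) != 0 ->
  inG D q x <-> phi D t x * phi D (- t) x = 1.
Proof.
move=> chq tD two; rewrite /inG (phi_norm x tD two) -(intr_eq_pchar _ _ chq).
by split => [/eqP|->].
Qed.

Lemma finF_fermat (F : finFieldType) (u : F) : u != 0 -> u ^+ (#|F|.-1) = 1.
Proof.
move=> u0; have := expf_card u.
have cF : (0 < #|F|)%N by apply/card_gt0P; exists 0.
rewrite -(prednK cF) exprS => E.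
by apply: (mulIf u0); rewrite mul1r mulrC.
Qed.

Lemma finF_prim (F : finFieldType) : exists g : F, (#|F|.-1).-primitive_root g.
Proof.
have cF : (1 < #|F|)%N.
  rewrite (cardD1 0) (cardD1 1) !inE oner_eq0 /=; lia.
have : has (#|F|.-1).-primitive_root (enum (predC1 (0 : F))).
  apply: has_prim_root; first by rewrite -ltnS prednK // ltnW.
  - apply/allP => x; rewrite mem_enum /= => x0.
    by rewrite unity_rootE finF_fermat.
  - exact: enum_uniq.
  - by rewrite -cardE cardC1.
by case/hasP => g _ Hg; exists g.
Qed.

Lemma finF_euler (F : finFieldType) (d : F) : odd #|F| -> d != 0 ->
  (forall x : F, x ^+ 2 != d) -> d ^+ (#|F|.-1)./2 = -1.
Proof.
move=> oF d0 nsq.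
have cF : (1 < #|F|)%N.
  rewrite (cardD1 0) (cardD1 1) !inE oner_eq0 /=; lia.
have ne : ~~ odd #|F|.-1.
  by move: oF cF; case: #|F| => [|m] //=.
set n := #|F|.-1.
have n0 : (0 < n)%N by rewrite /n -ltnS prednK // ltnW.
have nE : n = ((n./2) * 2)%N by rewrite -{1}(odd_double_half n) (negPf ne) add0n muln2.
have [g Hg] := finF_prim F; rewrite -/n in Hg.
have [i di] := prim_rootP Hg (finF_fermat d0).
have io : odd i.
  apply/negP => /negP ie; move: (nsq (g ^+ (i./2))).
  rewrite -exprM di; have -> : (i./2 * 2)%N = i.
    by rewrite -{2}(odd_double_half i) (negPf ie) add0n muln2.
  by rewrite eqxx.
set e := g ^+ n./2.
have e2 : e ^+ 2 = 1 by rewrite /e -exprM -nE prim_expr_order.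
have e1 : e != 1.
  rewrite /e -(prim_order_dvd Hg); apply/negP => /dvdn_leq.
  have h2 : (0 < n./2)%N by rewrite -(ltn_pmul2r (isT : (0 < 2)%N)) -nE.
  move=> /(_ h2); rewrite leqNgt; move/negP; apply.
  by rewrite {2}nE -{1}(muln1 n./2) ltn_mul2l h2.
have em1 : e = -1.
  have : (e - 1) * (e + 1) = 0 by rewrite -subr_sqr e2 expr1n subrr.
  move/eqP; rewrite mulf_eq0 subr_eq0 (negPf e1) /= addr_eq0 => /eqP //.
rewrite di -exprM mulnC exprM -/e em1.
by rewrite -signr_odd io expr1.
Qed.

Lemma natz_intr (R : nzRingType) (n : nat) : ((n%:Z)%:~R : R) = n%:R.
Proof. by rewrite -pmulrn. Qed.

Lemma Fp_lift (q : nat) (c : 'F_q) : prime q -> (((val c)%:Z)%:~R : 'F_q) = c.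
Proof.
move=> pq; rewrite natz_intr; apply: val_inj; rewrite /= val_Fp_nat // modn_small //.
by apply: leq_trans (ltn_ord c) _; rewrite Fp_cast.
Qed.

Lemma Fp_two (q : nat) : prime q -> odd q -> (2%:R : 'F_q) != 0.
Proof.
move=> pq oq; rewrite -(dvdn_pcharf (pchar_Fp pq)); apply/negP => /dvdn_leq.
have := prime_gt1 pq; case: q pq oq => [|[|[|q]]] //= pq oq _.
by move/(_ isT).
Qed.

Lemma key_split (D : int) (q : nat) (x0 : 'I_q) : prime q -> odd q -> ~~ (q%:Z %| D)%Z ->
  (q%:Z %| (x0%:Z) ^+ 2 - D)%Z ->
  exists (K : fieldType) (t : K), [/\ q \in [pchar K], t ^+ 2 = D%:~R, t != 0 & (2%:R : K) != 0] /\
    ((forall x, phi D t x * phi D (-t) x = 1 ->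
        phi D t x ^+ q.-1 = 1 /\ phi D (-t) x ^+ q.-1 = 1) /\
    exists x, phi D t x * phi D (-t) x = 1 /\ forall k, phi D t x ^+ k = 1 -> (q.-1 %| k)%N).
Proof.
move=> pq oq nqD hx0.
have chq := pchar_Fp pq.
have two := Fp_two pq oq.
have cq : #|'F_q|.-1 = q.-1 by rewrite card_Fp.
exists ('F_q : fieldType); exists ((x0%:Z)%:~R).
have tD : ((x0%:Z)%:~R : 'F_q) ^+ 2 = D%:~R.
  by apply/eqP; rewrite -subr_eq0 -rmorphXn -intrB (intr_eq0_pchar _ chq).
have Dn0 : (D%:~R : 'F_q) != 0 by rewrite (intr_eq0_pchar _ chq).
have tn0 : ((x0%:Z)%:~R : 'F_q) != 0.
  by apply: contraNneq Dn0 => t0; rewrite -tD t0 expr0n.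
set t := (x0%:Z)%:~R : 'F_q.
split => //; split.
  move=> x uv.
  have u0 : phi D t x != 0 by apply/negP => /eqP u0; move: uv; rewrite u0 mul0r => /eqP; rewrite eq_sym oner_eq0.
  have v0 : phi D (- t) x != 0 by apply/negP => /eqP v0; move: uv; rewrite v0 mulr0 => /eqP; rewrite eq_sym oner_eq0.
  by rewrite -cq !finF_fermat.
have [g Hg] := finF_prim ('F_q : finFieldType); rewrite cq in Hg.
have g0 : g != 0 by rewrite (prim_root_eq0 Hg) -lt0n -ltnS prednK ?prime_gt0 // prime_gt1.
pose b := (g - g^-1) / (wt D t - wt D (- t)).
pose a := g - b * wt D t.
exists ((val a)%:Z, (val b)%:Z).
have wd := wt_diff D two tn0.
have E1 : phi D t ((val a)%:Z, (val b)%:Z) = g.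
  by rewrite /phi !Fp_lift // /a; ring.
have E2 : phi D (- t) ((val a)%:Z, (val b)%:Z) = g^-1.
  rewrite /phi !Fp_lift // /a.
  have -> : g - b * wt D t + b * wt D (- t) = g - b * (wt D t - wt D (- t)) by ring.
  by rewrite /b divfK // opprB addrC subrK.
rewrite E1 E2 mulfV //; split => // k gk.
by rewrite (prim_order_dvd Hg) gk.
Qed.


Section Inert.
Import Pdiv.CommonRing Pdiv.RingMonic.
Variables (q : nat) (D : int).
Hypotheses (pq : prime q) (oq : odd q).
Let d : 'F_q := D%:~R.
Hypothesis nres : forall x : 'F_q, x ^+ 2 != d.
Let h : {poly 'F_q} := 'X^2 - d%:P.

Lemma h_monic : h \is monic.
Proof. exact: monicXnsubC. Qed.

Lemma h_size : size h = 3%N.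
Proof. exact: size_XnsubC. Qed.

Lemma h_mi : monic_irreducible_poly h.
Proof.
split; last exact: h_monic.
apply: cubic_irreducible; first by rewrite h_size.
move=> x; rewrite /root !hornerE subr_eq0; exact: nres.
Qed.

Let K := {poly %/ h with h_mi}.

Lemma chK : q \in [pchar K].
Proof. exact: (etrans (pchar_qpoly h q) (pchar_Fp pq)). Qed.

Definition cK (c : 'F_q) : K := qpolyC h c.

Lemma cKD a b : cK (a + b) = cK a + cK b. Proof. exact: qpolyCD. Qed.
Lemma cKM a b : cK (a * b) = cK a * cK b. Proof. exact: qpolyCM. Qed.
Lemma cKN a : cK (- a) = - cK a. Proof. exact: qpolyCN. Qed.
Lemma cK1 : cK 1 = 1. Proof. by apply: val_inj. Qed.
Lemma cKX a n : cK (a ^+ n) = cK a ^+ n.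
Proof. by elim: n => [|n IH]; rewrite ?expr0 ?cK1 // !exprS cKM IH. Qed.
Lemma cK_int (z : int) : cK (z%:~R) = z%:~R.
Proof. exact: (rmorph_int (qpolyC h)). Qed.

Lemma mk_h : mk_monic h = h.
Proof. exact: mk_monicE h_mi. Qed.

Lemma inq_C c : (in_qpoly h c%:P : K) = cK c.
Proof. apply: val_inj; apply: (@in_qpoly_small _ h c%:P); rewrite size_polyC mk_h h_size; by case: (c != 0). Qed.

Lemma inq_h : (in_qpoly h h : K) = 0.
Proof. by apply: val_inj; rewrite /= mk_h rmodpp // h_monic. Qed.

Definition tK : K := 'qX.

Lemma tK2 : tK ^+ 2 = D%:~R.
Proof.
rewrite /tK /qpolyX -rmorphXn.
have -> : ('X^2 : {poly 'F_q}) = h + d%:P by rewrite /h subrK.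
by rewrite rmorphD /= inq_h add0r inq_C cK_int.
Qed.


Lemma tK_dec (u : K) : exists c0 c1 : 'F_q, u = cK c0 + cK c1 * tK.
Proof.
set p : {poly 'F_q} := val u.
have sp : (size p <= 2)%N by apply: (leq_trans (size_npoly u)); rewrite mk_h h_size.
have pE : p = (p`_0)%:P + (p`_1)%:P * 'X.
  apply/polyP => i; rewrite coefD coefC coefMX coefC.
  case: i => [|[|i]] /=; rewrite ?addr0 ?add0r //.
  by rewrite nth_default // (leq_trans sp).
exists p`_0, p`_1.
have -> : u = in_qpoly h p.
  by apply: val_inj; symmetry; apply: (@in_qpoly_small _ h p); rewrite mk_h h_size.
by rewrite {1}pE rmorphD rmorphM /= !inq_C.
Qed.

Lemma cardK : #|K| = (q ^ 2)%N.
Proof. by rewrite card_qfpoly card_Fp // h_size. Qed.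

Lemma d_neq0 : d != 0.
Proof. by apply/negP => /eqP d0; move: (nres 0); rewrite d0 expr0n. Qed.

Lemma tK_frob : tK ^+ q = - tK.
Proof.
have oF : odd #|'F_q| by rewrite card_Fp.
have E := finF_euler oF d_neq0 nres; rewrite card_Fp // in E.
have qE : q = ((q.-1)./2 * 2).+1.
  rewrite -{1}(prednK (prime_gt0 pq)); congr _.+1.
  rewrite -{1}(odd_double_half q.-1) muln2.
  by move: oq; rewrite -{1}(prednK (prime_gt0 pq)) /= => /negPf ->.
have -> : tK ^+ q = tK ^+ ((q.-1)./2 * 2).+1 by rewrite -qE.
rewrite exprS mulnC exprM tK2 -cK_int -cKX E cKN cK1.
by rewrite mulrN1.
Qed.


Lemma frob_phi x : phi D tK x ^+ q = phi D (- tK) x.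
Proof.
have fE : forall z : K, z ^+ q = pFrobenius_aut chK z by move=> z; rewrite pFrobenius_autE.
rewrite fE /phi rmorphD rmorphM /= !rmorph_int; congr (_ + _ * _).
rewrite /wt; case: ifP => _; last by rewrite -fE tK_frob.
by rewrite fmorph_div rmorphD rmorph1 rmorph_nat /= -fE tK_frob.
Qed.

Lemma two_pchar (R : nzRingType) : q \in [pchar R] -> (2%:R : R) != 0.
Proof.
move=> chR; rewrite -(dvdn_pcharf chR); apply/negP => /dvdn_leq.
have := prime_gt1 pq; case: (q) oq => [|[|[|r]]] //= _ _.
by move/(_ isT).
Qed.

Lemma key_inert : exists (K : fieldType) (t : K),
   [/\ q \in [pchar K], t ^+ 2 = D%:~R, t != 0 & (2%:R : K) != 0] /\
    ((forall x, phi D t x * phi D (-t) x = 1 ->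
        phi D t x ^+ q.+1 = 1 /\ phi D (-t) x ^+ q.+1 = 1) /\
    exists x, phi D t x * phi D (-t) x = 1 /\ forall k, phi D t x ^+ k = 1 -> (q.+1 %| k)%N).
Proof.
have two := two_pchar chK.
have nqD : ~~ (q%:Z %| D)%Z by rewrite -(intr_eq0_pchar _ (pchar_Fp pq)) d_neq0.
have Dn0 : (D%:~R : K) != 0 by rewrite (intr_eq0_pchar _ chK).
have tn0 : tK != 0.
  by apply: contraNneq Dn0 => t0; rewrite -tK2 t0 expr0n.
exists (K : fieldType), tK; split.
  by split; [exact: chK | exact: tK2 | exact: tn0 | exact: two].
split.
  move=> x uv.
  have u1 : phi D tK x ^+ q.+1 = 1 by rewrite exprS frob_phi.
  split => //.
  by have := congr1 (fun z => z ^+ q.+1) uv; rewrite /= exprMn u1 mul1r expr1n.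
have [g Hg] := finF_prim (K : finFieldType).
have cE : (#|K|.-1 = q.-1 * q.+1)%N.
  rewrite cardK; case: (q) pq => [|r] // _; rewrite !expnS expn0 muln1 /=; nia.
rewrite cE in Hg.
set u := g ^+ q.-1.
have [c0 [c1 uE]] := tK_dec u.
pose a := if (D %% 4)%Z == 1 then c0 - c1 else c0.
pose b := if (D %% 4)%Z == 1 then 2%:R * c1 else c1.
have liftK : forall c : 'F_q, ((((val c)%:Z)%:~R) : K) = cK c.
  by move=> c; rewrite -cK_int Fp_lift.
have cK2 : cK 2%:R = 2%:R by rewrite -natz_intr cK_int natz_intr.
exists ((val a)%:Z, (val b)%:Z).
have E1 : phi D tK ((val a)%:Z, (val b)%:Z) = u.
  rewrite /phi !liftK uE /a /b /wt; case: ifP => _ //.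
  by rewrite cKD cKN cKM cK2; field.
have uq : u ^+ q.+1 = 1 by rewrite /u -exprM prim_expr_order.
rewrite -frob_phi E1 -exprS uq; split => // k uk.
have : (q.-1 * q.+1 %| q.-1 * k)%N by rewrite (prim_order_dvd Hg) exprM uk.
by rewrite dvdn_pmul2l // -ltnS prednK ?prime_gt0 // prime_gt1.
Qed.

End Inert.




Lemma kron_q (D : int) (q : nat) : prime q -> odd q -> ~~ (q%:Z %| D)%Z ->
  kronecker D q = if [exists x : 'I_q, (q%:Z %| (x%:Z) ^+ 2 - D)%Z] then 1 else -1.
Proof.
move=> pq oq nqD.
rewrite /kronecker primes_prime // big_seq1 logn_prime // eqxx expr1 /kron_prime.
have -> : (q == 2%N) = false by apply/negP => /eqP q2; rewrite q2 in oq.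
by rewrite (negPf nqD).
Qed.

Lemma key (D : int) (q : nat) : prime q -> odd q -> ~~ (q%:Z %| D)%Z ->
  exists (K : fieldType) (t : K),
   [/\ q \in [pchar K], t ^+ 2 = D%:~R, t != 0 & (2%:R : K) != 0] /\
    ((forall x, phi D t x * phi D (-t) x = 1 ->
        phi D t x ^+ `|FD D q| = 1 /\ phi D (-t) x ^+ `|FD D q| = 1) /\
    exists x, phi D t x * phi D (-t) x = 1 /\ forall k, phi D t x ^+ k = 1 -> (`|FD D q| %| k)%N).
Proof.
move=> pq oq nqD; rewrite /FD (kron_q pq oq nqD).
case: existsP => [[x0 hx0]|nex].
  have -> : `|q%:Z - 1|%N = q.-1.
    by case: (q) pq => [|r] // _; lia.
  exact: (key_split pq oq nqD hx0).
have -> : `|(q%:Z - -1)%R|%N = q.+1 by lia.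
apply: (key_inert pq oq).
move=> x; apply/negP => /eqP x2.
apply: nex; have xq : (val x < q)%N by apply: leq_trans (ltn_ord x) _; rewrite Fp_cast.
exists (Ordinal xq) => /=.
by rewrite -(intr_eq0_pchar _ (pchar_Fp pq)) intrB rmorphXn /= Fp_lift // x2 subrr.
Qed.


Lemma sqfree_dvd (N : nat) (z : int) : squarefree_nat N ->
  (forall p, prime p -> (p %| N)%N -> (p%:Z %| z)%Z) -> (N%:Z %| z)%Z.
Proof.
case=> N0 sq H; rewrite dvdzE /=; apply/(dvdn_partP _ N0) => p.
rewrite mem_primes => /and3P [pp _ pN].
have l1 : (logn p N <= 1)%N.
  rewrite leqNgt -(pfactor_dvdn 2 pp N0); exact: sq.
have l0 : (0 < logn p N)%N by rewrite logn_gt0 mem_primes pp N0.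
rewrite p_part.
have -> : logn p N = 1%N by lia.
by rewrite expn1; have := H p pp pN; rewrite dvdzE.
Qed.

Lemma qeqmod_sqfree (N : nat) y : squarefree_nat N ->
  (forall p, prime p -> (p %| N)%N -> qeqmod p y (1, 0)) -> qeqmod N y (1, 0).
Proof.
move=> sq H; split; rewrite eqz_mod_dvd; apply: sqfree_dvd => // p pp pN;
  have [h1 h2] := H p pp pN; by rewrite -eqz_mod_dvd.
Qed.

Lemma qeqmod_dvd (N q : nat) x y : (q %| N)%N -> qeqmod N x y -> qeqmod q x y.
Proof.
move=> qN [h1 h2]; rewrite /qeqmod !eqz_mod_dvd in h1 h2 *.
have qN' : (q%:Z %| N%:Z)%Z by rewrite dvdzE.
by split; apply: dvdz_trans qN' _.
Qed.

Lemma inG_dvd (D : int) (N q : nat) x : (q %| N)%N -> inG D N x -> inG D q x.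
Proof.
move=> qN; rewrite /inG !eqz_mod_dvd => h.
have qN' : (q%:Z %| N%:Z)%Z by rewrite dvdzE.
exact: dvdz_trans qN' h.
Qed.

Lemma phi_congr (K : fieldType) (D : int) (q : nat) (t : K) x y :
  q \in [pchar K] -> (q%:Z %| x.1 - y.1)%Z -> (q%:Z %| x.2 - y.2)%Z -> phi D t x = phi D t y.
Proof.
move=> chq h1 h2; rewrite /phi.
rewrite -(intr_eq0_pchar _ chq) intrB subr_eq0 in h1.
rewrite -(intr_eq0_pchar _ chq) intrB subr_eq0 in h2.
by rewrite (eqP h1) (eqP h2).
Qed.

Unset Implicit Arguments.

Theorem theorem4p3 (D : int) (N : nat) :
  squarefree_int D -> (1 < N)%N -> odd N -> squarefree_nat N -> ~~ prime N ->
  coprimez N%:Z D ->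
  (G_Carmichael D N <->
   forall q : nat, prime q -> (q %| N)%N -> (FD D q %| FD D N)%Z).
Proof.
move=> sqD N1 oN sqN npN cND.
have Hq : forall q, prime q -> (q %| N)%N -> odd q /\ ~~ (q%:Z %| D)%Z.
  move=> q pq qN; split.
    case oq: (odd q) => //.
    have : (2 %| N)%N by apply: dvdn_trans qN; rewrite dvdn2 oq.
    by rewrite dvdn2 oN.
  apply/negP => qD.
  have : (q%:Z %| gcdz N D)%Z by rewrite dvdz_gcd qD andbT dvdzE.
  rewrite (eqP cND) dvdzE /= dvdn1 => /eqP q1.
  by move: pq; rewrite q1.
split.
  case=> _ _ _ _ HC q pq qN.
  have [oq nqD] := Hq q pq qN.
  have [K [t [[chq tD tn0 two] [_ [x0 [uv0 ord0]]]]]] := key pq oq nqD.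
  set M := (N %/ q)%N.
  have NE : N = (q * M)%N by rewrite /M mulnC divnK.
  have N0 : (0 < N)%N by case: sqN.
  have cqM : coprime q M.
    rewrite prime_coprime //; apply/negP => qM.
    case: sqN => _ /(_ q pq); rewrite NE; apply/negP/negPn.
    by rewrite dvdn_pmul2l ?prime_gt0.
  have [u [v uvE]] := Bezoutz M%:Z q%:Z.
  have g1 : gcdz M%:Z q%:Z = 1.
    by apply/eqP; rewrite -/(coprimez _ _) coprimezE /= coprime_sym.
  rewrite g1 in uvE.
  pose y := (1 + M%:Z * u * (x0.1 - 1), M%:Z * u * x0.2).
  have Eq1 : (q%:Z %| y.1 - x0.1)%Z.
    have -> : y.1 - x0.1 = (x0.1 - 1) * (u * M%:Z + v * q%:Z - 1) + q%:Z * (- v * (x0.1 - 1)).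
      by rewrite /y /=; ring.
    rewrite uvE subrr mulr0 add0r.
    exact: dvdz_mulr.
  have Eq2 : (q%:Z %| y.2 - x0.2)%Z.
    have -> : y.2 - x0.2 = x0.2 * (u * M%:Z + v * q%:Z - 1) + q%:Z * (- v * x0.2).
      by rewrite /y /=; ring.
    rewrite uvE subrr mulr0 add0r.
    exact: dvdz_mulr.
  have py : forall s : K, phi D s y = phi D s x0.
    by move=> s; exact: phi_congr chq Eq1 Eq2.
  have yG : inG D N y.
    rewrite /inG eqz_mod_dvd NE PoszM Gauss_dvdz; last by rewrite coprimezE.
    apply/andP; split.
      by rewrite -eqz_mod_dvd; apply/(inG_phi _ chq tD two); rewrite !py.
    rewrite /qnorm /y /=; case: ifP => _.
      set c := ((1 - D) %/ 4)%Z.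
      set A := u * (x0.1 - 1); set B := u * x0.2.
      have -> : (1 + M%:Z * u * (x0.1 - 1)) ^+ 2 + (1 + M%:Z * u * (x0.1 - 1)) * (M%:Z * u * x0.2) + c * (M%:Z * u * x0.2) ^+ 2 - 1
        = M%:Z * (2 * A + M%:Z * A ^+ 2 + B + M%:Z * A * B + c * M%:Z * B ^+ 2) by rewrite /A /B; ring.
      exact: dvdz_mulr.
    set A := u * (x0.1 - 1); set B := u * x0.2.
    have -> : (1 + M%:Z * u * (x0.1 - 1)) ^+ 2 - D * (M%:Z * u * x0.2) ^+ 2 - 1
        = M%:Z * (2 * A + M%:Z * A ^+ 2 - D * M%:Z * B ^+ 2) by rewrite /A /B; ring.
    exact: dvdz_mulr.
  have := qeqmod_dvd qN (HC y yG).
  case/(qeqmod_phi D _ chq tn0 two) => h1 _.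
  rewrite (phi_pow tD two) py in h1.
  by rewrite dvdzE; apply: ord0.
move=> H; split => // x xG.
apply: qeqmod_sqfree => // q pq qN.
have [oq nqD] := Hq q pq qN.
have [K [t [[chq tD tn0 two] [HA _]]]] := key pq oq nqD.
have uv := (inG_phi x chq tD two).1 (inG_dvd qN xG).
have [h1 h2] := HA x uv.
have := H q pq qN; rewrite dvdzE => /dvdnP [m mE].
apply/(qeqmod_phi D _ chq tn0 two).
have tD' : (- t) ^+ 2 = D%:~R by rewrite sqrrN.
rewrite (phi_pow tD two) (phi_pow tD' two) mE mulnC !exprM h1 h2 !expr1n.
by [].
Qed.
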